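(* Let $\Gamma$ be a tetravalent graph whose full automorphism group $\mathrm{Aut}(\Gamma)$ acts regularly on the arcs of $\Gamma$. Then $\Gamma$ is the underlying graph of a map of class $2_{\{0,1\}}$ if and only if the vertex stabilizers in $\mathrm{Aut}(\Gamma)$ are isomorphic to the Klein $4$-group. Moreover, in this case there are exactly three pairwise nonisomorphic such maps.
   Context: A map is a $2$-cell embedding of a connected simple graph (its underlying graph) in a closed surface; the components of the complement are the faces. All maps considered are polytopal: flags correspond bijectively to incident triples (vertex, edge, face). For a flag $\Phi$ and $i\in\{0,1,2\}$, $\Phi^i$ is the unique flag differing from $\Phi$ exactly in its vertex ($i=0$), edge ($i=1$) or face ($i=2$). $\mathrm{Aut}(\mathcal M)$ is the group of automorphisms of the underlying graph preserving the set of faces, acting on flags. A map is in class $2_{\{0,1\}}$ if $\mathrm{Aut}(\mathcal M)$ has exactly two orbits on flags and for every flag $\Phi$, the flags $\Phi^0,\Phi^1$ lie in the orbit of $\Phi$ while $\Phi^2$ does not. *)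

(* Defs.v *)
From mathcomp Require Import all_boot all_fingroup zmodp.
Set Implicit Arguments. Unset Strict Implicit. Unset Printing Implicit Defensive.

(* Edges are the 2-element vertex sets [set x; y] with e x y; a face is
   represented by its set of edges (a set of sets of vertices); a map is
   represented by its set of faces F. *)

Section MapDefs.
Variable V : finType.
Variable e : rel V.

Definition simple_graph : Prop := symmetric e /\ irreflexive e.
Definition connected_graph : Prop := forall x y : V, connect e x y.
Definition tetravalent : Prop := forall v : V, #|[set w | e v w]| = 4.

Definition graph_aut_set : {set {perm V}} :=
  [set g : {perm V} | [forall x, forall y, e (g x) (g y) == e x y]].

Lemma graph_aut_group_set : group_set graph_aut_set.
Proof.
apply/group_setP; split.
  by rewrite inE; apply/forallP => x; apply/forallP => y; rewrite !perm1.
move=> g h; rewrite !inE => /forallP Hg /forallP Hh.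
apply/forallP => x; apply/forallP => y; rewrite !permM.
by rewrite (eqP (forallP (Hh (g x)) (g y))) (eqP (forallP (Hg x) y)).
Qed.

Canonical graph_aut := Group graph_aut_group_set.

Definition arc_regular : Prop :=
  forall x y x' y' : V, e x y -> e x' y' ->
    #|[set g in graph_aut | (g x == x') && (g y == y')]| = 1.

Definition klein_stabilizers : Prop :=
  forall v : V, 'C_(graph_aut)[v | 'P] \isog [set: 'Z_2 * 'Z_2].

Definition is_edge (s : {set V}) : bool :=
  [exists x, exists y, e x y && (s == [set x; y])].

Definition cycle_face (f : {set {set V}}) : Prop :=
  exists c : seq V, [/\ uniq c, 2 < size c, path.cycle e c &
                       f = [set [set x; next c x] | x in c]].

Definition link_rel (F : {set {set {set V}}}) (v : V) : rel {set V} :=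
  fun a b => [&& v \in a, v \in b, is_edge a, is_edge b &
                [exists f in F, (a \in f) && (b \in f)]].

(* Polytopal map with underlying graph (V, e): faces are cycles, every edge
   lies in exactly two faces, the faces around every vertex form a single
   cycle (so the result is a closed surface), and the graph is connected. *)
Definition is_map (F : {set {set {set V}}}) : Prop :=
  [/\ connected_graph,
      forall f, f \in F -> cycle_face f,
      forall s, is_edge s -> #|[set f in F | s \in f]| = 2 &
      forall v a b, is_edge a -> is_edge b -> v \in a -> v \in b ->
        connect (link_rel F v) a b].

Definition act_edge (g : {perm V}) (s : {set V}) : {set V} := g @: s.
Definition act_face (g : {perm V}) (f : {set {set V}}) : {set {set V}} :=
  act_edge g @: f.

Definition map_aut (F : {set {set {set V}}}) : {set {perm V}} :=
  [set g in graph_aut | act_face g @: F == F].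

Definition flagT := (V * {set V} * {set {set V}})%type.
Definition is_flag (F : {set {set {set V}}}) (t : flagT) : bool :=
  [&& t.1.1 \in t.1.2, is_edge t.1.2, t.1.2 \in t.2 & t.2 \in F].
Definition act_flag (g : {perm V}) (t : flagT) : flagT :=
  (g t.1.1, act_edge g t.1.2, act_face g t.2).
Definition same_orbit (F : {set {set {set V}}}) (t u : flagT) : Prop :=
  exists2 g, g \in map_aut F & act_flag g t = u.

(* u = t^i : the flag differing from t exactly in component i. *)
Definition adj0 (t u : flagT) : Prop :=
  [/\ u.1.1 <> t.1.1, u.1.2 = t.1.2 & u.2 = t.2].
Definition adj1 (t u : flagT) : Prop :=
  [/\ u.1.1 = t.1.1, u.1.2 <> t.1.2 & u.2 = t.2].
Definition adj2 (t u : flagT) : Prop :=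
  [/\ u.1.1 = t.1.1, u.1.2 = t.1.2 & u.2 <> t.2].

Definition class2_01 (F : {set {set {set V}}}) : Prop :=
  [/\ (exists t1 t2, [/\ is_flag F t1, is_flag F t2, ~ same_orbit F t1 t2 &
        forall t, is_flag F t -> same_orbit F t1 t \/ same_orbit F t2 t]),
      (forall t u, is_flag F t -> is_flag F u -> adj0 t u -> same_orbit F t u),
      (forall t u, is_flag F t -> is_flag F u -> adj1 t u -> same_orbit F t u) &
      (forall t u, is_flag F t -> is_flag F u -> adj2 t u -> ~ same_orbit F t u)].

Definition map_iso (F1 F2 : {set {set {set V}}}) : Prop :=
  exists2 g, g \in graph_aut & act_face g @: F1 = F2.

End MapDefs.

(* Main.v *)
Require Import Defs.
From mathcomp Require Import all_boot all_fingroup zmodp.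
From mathcomp Require Import pgroup abelian sylow.
Set Implicit Arguments.
Local Open Scope group_scope.
Set Default Proof Using "All". Unset Strict Implicit. Unset Printing Implicit Defensive.

Section Basic.
Variables (V : finType) (e : rel V).
Hypotheses (He : simple_graph e) (Ht : tetravalent e) (Ha : arc_regular e).
Local Notation G := (graph_aut e).
Implicit Types (g h k : {perm V}) (x y v w : V) (E : {set V}) (f : {set {set V}}).

Lemma e_sym x y : e x y = e y x. Proof. by case: He => Hs _; apply: Hs. Qed.
Lemma eirr x : e x x = false. Proof. by case: He => _ Hi; apply: Hi. Qed.
Lemma e_neq x y : e x y -> x != y.
Proof. by apply: contraTneq => ->; rewrite eirr. Qed.

Lemma autE g x y : g \in G -> e (g x) (g y) = e x y.
Proof. by rewrite inE => /forallP/(_ x)/forallP/(_ y)/eqP. Qed.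

Lemma arc_uniq x y g h : e x y -> g \in G -> h \in G -> g x = h x -> g y = h y -> g = h.
Proof.
move=> Hxy Hg Hh E1 E2.
have /eqP/cards1P[k Hk] := Ha Hxy (etrans (autE x y Hg) Hxy).
have : g \in [set k] by rewrite -Hk inE Hg !eqxx.
have : h \in [set k] by rewrite -Hk inE Hh -E1 -E2 !eqxx.
by rewrite !inE => /eqP -> /eqP ->.
Qed.

Lemma arc_ex x y x' y' : e x y -> e x' y' -> exists2 g, g \in G & g x = x' /\ g y = y'.
Proof.
move=> H1 H2; have /eqP/cards1P[k Hk] := Ha H1 H2.
have : k \in [set k] by rewrite inE.
by rewrite -Hk inE => /andP[Hk1 /andP[/eqP ? /eqP ?]]; exists k.
Qed.

Lemma has_nbr v : exists y, e v y.
Proof.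
have := Ht v; set N := [set w | e v w]; case: (set_0Vmem N) => [-> | [y]]; first by rewrite cards0.
by rewrite inE => Hy _; exists y.
Qed.

Lemma act_edge2 g x y : act_edge g [set x; y] = [set g x; g y].
Proof. by rewrite /act_edge imsetU1 imset_set1. Qed.

Lemma act_edgeM g h E : act_edge (g * h) E = act_edge h (act_edge g E).
Proof. by rewrite /act_edge -imset_comp; apply: eq_imset => x; rewrite permM. Qed.

Lemma act_faceM g h f : act_face (g * h) f = act_face h (act_face g f).
Proof. by rewrite /act_face -imset_comp; apply: eq_imset => E; rewrite /= act_edgeM. Qed.

Lemma act_edge1 E : act_edge 1 E = E.
Proof. by rewrite /act_edge (eq_imset _ (@perm1 V)) imset_id. Qed.

Lemma act_face1 f : act_face 1 f = f.
Proof. by rewrite /act_face (eq_imset _ act_edge1) imset_id. Qed.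

Lemma act_edge_inj g : injective (act_edge g).
Proof. exact: imset_inj (@perm_inj _ g). Qed.

Lemma act_face_inj g : injective (act_face g).
Proof. exact: imset_inj (@act_edge_inj g). Qed.

Lemma act_edgeK g : cancel (act_edge g) (act_edge g^-1).
Proof. by move=> E; rewrite -act_edgeM mulgV act_edge1. Qed.
Lemma act_faceK g : cancel (act_face g) (act_face g^-1).
Proof. by move=> E; rewrite -act_faceM mulgV act_face1. Qed.
Lemma act_edgeKV g : cancel (act_edge g^-1) (act_edge g).
Proof. by move=> E; rewrite -act_edgeM mulVg act_edge1. Qed.
Lemma act_faceKV g : cancel (act_face g^-1) (act_face g).
Proof. by move=> E; rewrite -act_faceM mulVg act_face1. Qed.

Lemma mem_act_edge g x E : (g x \in act_edge g E) = (x \in E).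
Proof. exact: mem_imset (@perm_inj _ g). Qed.
Lemma mem_act_face g E f : (act_edge g E \in act_face g f) = (E \in f).
Proof. exact: mem_imset (@act_edge_inj g). Qed.

Lemma is_edgeP E : reflect (exists x y, e x y /\ E = [set x; y]) (is_edge e E).
Proof.
apply: (iffP existsP) => [[x /existsP[y /andP[H /eqP ->]]] | [x [y [H ->]]]].
  by exists x, y.
by exists x; apply/existsP; exists y; rewrite H eqxx.
Qed.

Lemma is_edge2 x y : e x y -> is_edge e [set x; y].
Proof. by move=> H; apply/is_edgeP; exists x, y. Qed.

Lemma set2_eqr (a b c : V) : [set a; b] = [set a; c] -> b = c.
Proof.
move=> H; have : b \in [set a; c] by rewrite -H set22.
case/set2P => // Eba; have : c \in [set a; b] by rewrite H set22.
by case/set2P => // ->.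
Qed.

Lemma edge_at v E : is_edge e E -> v \in E -> exists y, e v y /\ E = [set v; y].
Proof.
case/is_edgeP => x [y [H ->]] /set2P [->|->]; first by exists y.
by exists x; rewrite e_sym setUC.
Qed.

Lemma is_edge_act g E : g \in G -> is_edge e E -> is_edge e (act_edge g E).
Proof.
move=> Hg /is_edgeP [x [y [H ->]]]; rewrite act_edge2; apply: is_edge2.
by rewrite autE.
Qed.

Lemma imset_sub_eq (T : finType) (phi : T -> T) (A : {set T}) :
  injective phi -> phi @: A \subset A -> phi @: A = A.
Proof.
move=> Hi Hs; apply/eqP; rewrite eqEcard Hs /= card_imset //.
Qed.


Lemma set2_cases (a b c d : V) : [set a; b] = [set c; d] ->
  (a = c /\ b = d) \/ (a = d /\ b = c).
Proof.
move=> H; have : a \in [set c; d] by rewrite -H set21.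
case/set2P => Ea; subst a; first by left; split => //; apply: set2_eqr H.
by right; split => //; apply: (@set2_eqr d); rewrite H setUC.
Qed.

Lemma inK v k : (k \in 'C_(G)[v | 'P]) = (k \in G) && (k v == v).
Proof. by rewrite !inE sub1set inE. Qed.


Definition cedges (c : seq V) : {set {set V}} := [set [set x; next c x] | x in c].

Lemma next_next_neq (c : seq V) v : uniq c -> 2 < size c -> v \in c -> next c (next c v) != v.
Proof.
move=> Hu Hs Hv; case: (rot_to Hv) => i q Hrot.
have Hu' : uniq (v :: q) by rewrite -Hrot rot_uniq.
have Hs' : 2 < size (v :: q) by rewrite -Hrot size_rot.
rewrite -!(next_rot i Hu) Hrot.
case: q Hu' Hs' {Hrot} => [|a [|b r]] //= Hu' _.
move: Hu'; rewrite !inE !negb_or => /and4P [/and3P [Hva Hvb _] _ _ _].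
by rewrite eqxx (eq_sym a v) (negbTE Hva) eqxx eq_sym.
Qed.

Section CF.
Variable c : seq V.
Hypotheses (Hu : uniq c) (Hsz : 2 < size c) (Hc : path.cycle e c).
Local Notation f := (cedges c).

Lemma cf_vert E v : E \in f -> v \in E -> v \in c.
Proof. by case/imsetP => x Hx -> /set2P [->|->] //; rewrite mem_next. Qed.

Lemma cf_next v : v \in c -> [set v; next c v] \in f.
Proof. by move=> Hv; apply: imset_f. Qed.

Lemma cf_prev v : v \in c -> [set prev c v; v] \in f.
Proof.
move=> Hv; apply/imsetP; exists (prev c v); first by rewrite mem_prev.
by rewrite next_prev.
Qed.

Lemma cf_at v E : v \in c -> E \in f -> v \in E ->
  E = [set v; next c v] \/ E = [set prev c v; v].
Proof.
move=> Hv /imsetP [x Hx ->] /set2P [<- | Hn]; first by left.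
by right; rewrite Hn prev_next.
Qed.

Lemma cf_neq v : v \in c -> [set v; next c v] != [set prev c v; v].
Proof.
move=> Hv; apply/eqP => /set2_cases [[H1 H2] | [_ H2]].
  by have := next_cycle Hc Hv; rewrite H2 eirr.
have := next_next_neq Hu Hsz Hv; by rewrite H2 next_prev // eqxx.
Qed.

Lemma cf_edge E : E \in f -> is_edge e E.
Proof. by case/imsetP => x Hx ->; apply: is_edge2; apply: next_cycle. Qed.

Lemma cf_two E v : E \in f -> v \in E -> exists E', [/\ E' \in f, v \in E', E' != E &
   forall E'', E'' \in f -> v \in E'' -> E'' = E \/ E'' = E'].
Proof.
move=> HE HvE; have Hv := cf_vert HE HvE.
have Hn := cf_neq Hv.
case: (cf_at Hv HE HvE) => ->.
  exists [set prev c v; v]; split; rewrite ?set22 ?cf_prev // 1?eq_sym //.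
  by move=> E'' H1 H2; apply: cf_at.
exists [set v; next c v]; split; rewrite ?set21 ?cf_next //.
by move=> E'' H1 H2; case: (cf_at Hv H1 H2); [right | left].
Qed.

End CF.

Lemma pig (T : eqType) (a b x y : T) : a != b -> (a = x \/ a = y) -> (b = x \/ b = y) ->
  x = a \/ x = b.
Proof.
move=> Hab [] HHa [] HHb; subst; rewrite ?eqxx in Hab; by [left | right].
Qed.

Lemma cf_sub c c' : uniq c -> 2 < size c -> path.cycle e c ->
  uniq c' -> 2 < size c' -> path.cycle e c' ->
  cedges c \subset cedges c' -> cedges c = cedges c'.
Proof.
move=> Hu Hs Hc Hu' Hs' Hc' /subsetP Hsub.
have key : forall y, y \in c -> y \in c' -> [set y; next c' y] \in cedges c.
  move=> y Hy Hy'.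
  have Hn := cf_neq Hu Hs Hc Hy.
  have H1 := cf_at Hu' Hs' Hc' Hy' (Hsub _ (cf_next Hu Hs Hc Hy)) (set21 _ _).
  have H2 := cf_at Hu' Hs' Hc' Hy' (Hsub _ (cf_prev Hu Hs Hc Hy)) (set22 _ _).
  case: (pig Hn H1 H2) => ->; [exact: (cf_next Hu Hs Hc) | exact: (cf_prev Hu Hs Hc)].
have Hcc : forall y, y \in c' -> y \in c.
  have [x0 Hx0] : exists x, x \in c by case: (c) Hs => [|x r] //; exists x; rewrite inE eqxx.
  have Hx0' : x0 \in c' by apply: (cf_vert Hu' Hs' Hc' (Hsub _ (cf_next Hu Hs Hc Hx0))); rewrite set21.
  move=> y; rewrite -(fconnect_cycle (cycle_next Hu') Hx0') => /connectP [pth Hp ->].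
  elim: pth x0 Hx0 Hx0' Hp => [//|z pth IH] x Hx Hx' /= /andP [/eqP Hz Hp].
  subst z; apply: IH => //; last by rewrite mem_next.
  by apply: (cf_vert Hu Hs Hc (key _ Hx Hx')); rewrite set22.
apply/eqP; rewrite eqEsubset; apply/andP; split; first by apply/subsetP.
apply/subsetP => E' /imsetP [y Hy' ->]; apply: key => //; exact: Hcc.
Qed.

Lemma cf_act g c : g \in G -> uniq c -> 2 < size c -> path.cycle e c ->
  [/\ uniq (map g c), 2 < size (map g c), path.cycle e (map g c) &
      act_face g (cedges c) = cedges (map g c)].
Proof.
move=> Hg Hu Hs Hc; split; first by rewrite map_inj_uniq //; apply: perm_inj.
  by rewrite size_map.
  rewrite cycle_map; apply: sub_cycle Hc => x y /= H; by rewrite autE.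
apply/setP => E; apply/imsetP/imsetP => [[E' /imsetP [x Hx ->] ->] | [y /mapP [x Hx ->] ->]].
  exists (g x); first by apply: map_f.
  by rewrite act_edge2 next_map //; apply: perm_inj.
exists [set x; next c x]; first by apply: imset_f.
by rewrite act_edge2 next_map //; apply: perm_inj.
Qed.

Lemma cycle_faceE f : cycle_face e f <-> exists c, [/\ uniq c, 2 < size c, path.cycle e c & f = cedges c].
Proof. by []. Qed.

Lemma MA_G F g : g \in map_aut e F -> g \in G.
Proof. by rewrite inE => /andP []. Qed.

Lemma MA_inv F g : g \in map_aut e F -> act_face g @: F = F.
Proof. by rewrite inE => /andP [_ /eqP]. Qed.

Lemma MA_M F g h : g \in map_aut e F -> h \in map_aut e F -> g * h \in map_aut e F.
Proof.
move=> Hg Hh; rewrite inE groupM ?(MA_G Hg) ?(MA_G Hh) //=.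
rewrite (eq_imset _ (act_faceM g h)) imset_comp MA_inv // MA_inv //.
Qed.

Lemma MA_V F g : g \in map_aut e F -> g^-1 \in map_aut e F.
Proof.
move=> Hg; rewrite inE groupV (MA_G Hg) /=.
rewrite -{1}(MA_inv Hg) -imset_comp (eq_imset _ (@act_faceK g)) imset_id //.
Qed.

Lemma MA_1 F : 1 \in map_aut e F.
Proof. by rewrite inE group1 (eq_imset _ act_face1) imset_id eqxx. Qed.

Lemma act_flagM g h t : act_flag (g * h) t = act_flag h (act_flag g t).
Proof. by case: t => [[w E] f]; rewrite /act_flag /= permM act_edgeM act_faceM. Qed.

Lemma act_flagK g t : act_flag g^-1 (act_flag g t) = t.
Proof. by rewrite -act_flagM mulgV; case: t => [[w E] f]; rewrite /act_flag /= perm1 act_edge1 act_face1. Qed.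

Lemma so_refl F t : same_orbit e F t t.
Proof. exists 1; first exact: MA_1. by case: t => [[w E] f]; rewrite /act_flag /= perm1 act_edge1 act_face1. Qed.

Lemma so_sym F t u : same_orbit e F t u -> same_orbit e F u t.
Proof. by case=> g Hg <-; exists g^-1; [apply: MA_V | apply: act_flagK]. Qed.

Lemma so_trans F t u t3 : same_orbit e F t u -> same_orbit e F u t3 -> same_orbit e F t t3.
Proof.
case=> g Hg <- [h Hh <-]; exists (g * h); first exact: MA_M.
by rewrite act_flagM.
Qed.

Lemma is_flag_act F g t : g \in map_aut e F -> is_flag e F t -> is_flag e F (act_flag g t).
Proof.
move=> Hg; case: t => [[w E] f] /and4P /= [H1 H2 H3 H4]; apply/and4P; split => /=.
- by rewrite mem_act_edge.
- by apply: is_edge_act => //; apply: MA_G Hg.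
- by rewrite mem_act_face.
- by rewrite -(MA_inv Hg); apply: imset_f.
Qed.

Lemma trans_v v0 x0 w : e v0 x0 -> exists2 h, h \in G & h v0 = w.
Proof.
move=> H; have [y Hy] := has_nbr w; have [h Hh [H1 _]] := arc_ex H Hy.
by exists h.
Qed.

Lemma connect_stay (T : finType) (r : rel T) (S : pred T) (a b : T) :
  a \in S -> (forall x1 y1 : T, x1 \in S -> r x1 y1 -> y1 \in S) -> connect r a b -> b \in S.
Proof.
move=> HaS HS /connectP [pth Hp ->]; elim: pth a HaS Hp => [//|z pth IH] a HaS /= /andP [H1 H2].
apply: IH H2; exact: HS H1.
Qed.

Lemma so_act F g t u : g \in map_aut e F ->
  same_orbit e F (act_flag g t) (act_flag g u) -> same_orbit e F t u.
Proof.
move=> Hg H; apply: (so_trans (u := act_flag g t)); first by exists g.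
apply: (so_trans H); apply: so_sym; by exists g.
Qed.

Section Base.
Variables (v0 x0 : V) (s : {perm V}).
Hypotheses (Hv0x0 : e v0 x0) (Hs : s \in G) (Hsv0 : s v0 = x0) (Hsx0 : s x0 = v0).

Lemma ss y : s (s y) = y.
Proof.
have -> : s (s y) = (s * s) y by rewrite permM.
suff -> : s * s = 1 by rewrite perm1.
apply: (arc_uniq Hv0x0); rewrite ?groupM ?group1 ?perm1 ?permM ?Hsv0 ?Hsx0 //.
Qed.

Definition E0 := [set v0; x0].

Lemma E0_edge : is_edge e E0.
Proof. exact: is_edge2. Qed.

Lemma nbrK y : e v0 y -> exists2 k, k \in G & k v0 = v0 /\ k x0 = y.
Proof.
move=> H; have [k Hk [H1 H2]] := arc_ex Hv0x0 H; by exists k.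
Qed.

Lemma stab_eq g h : g \in G -> h \in G -> g v0 = v0 -> h v0 = v0 -> g x0 = h x0 -> g = h.
Proof. move=> Hg Hh H1 H2 H3; apply: (arc_uniq Hv0x0) => //; congruence. Qed.

Definition cyc p := fingraph.orbit (p * s) v0.
Definition face p := [set [set y; next (cyc p) y] | y in cyc p].

Section FaceP.
Variable p : {perm V}.
Hypotheses (Hp : p \in G) (Hpv0 : p v0 = v0) (Hpp : forall y, p (p y) = y)
  (Hpx0 : p x0 != x0).

Local Notation rho := (p * s).
Local Notation c := (cyc p).

Lemma rhoE y : rho y = s (p y). Proof. by rewrite permM. Qed.
Lemma rhoG : rho \in G. Proof. by rewrite groupM. Qed.

Lemma c_fcycle : fcycle rho c.
Proof. exact: cycle_orbit (@perm_inj _ rho) v0. Qed.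

Lemma c_ind (P : V -> Prop) : P v0 -> (forall y, P y -> P (rho y)) ->
  forall y, y \in c -> P y.
Proof.
move=> P0 PS y; rewrite /cyc -fconnect_orbit => /iter_findex <-.
by elim: findex => //= n IH; apply: PS.
Qed.

Lemma c_nextE y : y \in c -> next c y = rho y.
Proof. move=> Hy; apply: (nextE _ Hy); exact: c_fcycle. Qed.

Lemma c_rho y : y \in c -> rho y \in c.
Proof. by move=> H; rewrite -c_nextE // mem_next. Qed.

Lemma c_pre y : rho y \in c -> y \in c.
Proof.
rewrite /cyc -!fconnect_orbit => H; apply: connect_trans H _.
by rewrite (fconnect_sym (@perm_inj _ rho)); apply: fconnect1.
Qed.

Lemma c_v0 : v0 \in c. Proof. exact: in_orbit. Qed.
Lemma rho_v0 : rho v0 = x0. Proof. by rewrite rhoE Hpv0. Qed.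
Lemma rho_px0 : rho (p x0) = v0. Proof. by rewrite rhoE Hpp. Qed.
Lemma c_x0 : x0 \in c. Proof. by have := c_rho c_v0; rewrite rho_v0. Qed.
Lemma c_px0 : p x0 \in c. Proof. by apply: c_pre; rewrite rho_px0 c_v0. Qed.

Lemma c_edge y : y \in c -> e y (rho y).
Proof.
move: y; apply: (c_ind (P := fun y => e y (rho y))); first by rewrite rho_v0.
by move=> y H; rewrite autE // rhoG.
Qed.

Lemma c_size : 2 < size c.
Proof.
have Hne : x0 != v0 by rewrite eq_sym e_neq.
have Hne' : (x0 != v0) = true by [].
have H1 : s (p x0) != v0.
  apply: contra Hpx0 => /eqP H; apply/eqP; apply: (@perm_inj _ s); by rewrite H Hsx0.
have H2 : s (p x0) != x0.
  apply/negP => /eqP H.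
  have : p x0 = v0 by apply: (@perm_inj _ s); rewrite H Hsv0.
  by move=> Hpx; have := autE v0 x0 Hp; rewrite Hpx Hpv0 eirr Hv0x0.
have : uniq [:: v0; x0; s (p x0)].
  by rewrite /= !inE !negb_or (eq_sym v0 x0) (eq_sym v0 (s (p x0))) (eq_sym x0 (s (p x0))) Hne H1 H2.
move/uniq_leq_size => /(_ c) /= H; apply: H => z; rewrite !inE.
case/or3P => /eqP ->; first exact: c_v0; first exact: c_x0.
by rewrite -rhoE c_rho // c_x0.
Qed.

Lemma face_cycle : cycle_face e (face p).
Proof.
exists c; split => //; first exact: orbit_uniq; first exact: c_size.
apply: (@sub_in_cycle _ (mem c) (frel rho)); last exact: c_fcycle.
  by move=> x y Hx _ /= /eqP <-; apply: c_edge.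
by apply/allP => z.
Qed.

Lemma mem_face E : reflect (exists2 y, y \in c & E = [set y; rho y]) (E \in face p).
Proof.
apply: (iffP imsetP) => [[y Hy ->] | [y Hy ->]]; exists y => //; by rewrite c_nextE.
Qed.

Lemma face_edge E : E \in face p -> is_edge e E.
Proof. by case/mem_face => y Hy ->; apply: is_edge2; apply: c_edge. Qed.

Lemma face_E0 : E0 \in face p.
Proof. by apply/mem_face; exists v0; rewrite ?rho_v0 // c_v0. Qed.

Lemma face_E1 : [set v0; p x0] \in face p.
Proof. by apply/mem_face; exists (p x0); rewrite ?rho_px0 1?setUC // c_px0. Qed.

Lemma face_at E : E \in face p -> v0 \in E -> E = E0 \/ E = [set v0; p x0].
Proof.
case/mem_face => y Hy -> /set2P [<- | Hv]; first by left; rewrite rho_v0.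
right; have -> : y = p x0 by apply: (@perm_inj _ rho); rewrite rho_px0.
by rewrite rho_px0 setUC.
Qed.

Lemma face_rev g : g \in G -> g v0 \in c -> (forall y, rho (g (rho y)) = g y) ->
  act_face g (face p) = face p.
Proof.
move=> Hg Hgv0 Hrev.
have Hgc : forall y, y \in c -> g y \in c.
  apply: (c_ind (P := fun y => g y \in c)) => // y Hy; apply: c_pre; by rewrite Hrev.
apply: imset_sub_eq; first exact: act_edge_inj.
apply/subsetP => E' /imsetP [E /mem_face [y Hy ->] ->].
apply/mem_face; exists (g (rho y)); first by apply: Hgc; apply: c_rho.
by rewrite act_edge2 Hrev setUC.
Qed.

Lemma face_s : act_face s (face p) = face p.
Proof.
apply: face_rev => //; first by rewrite Hsv0 c_x0.
by move=> y; rewrite !rhoE ss Hpp.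
Qed.

Lemma face_p : act_face p (face p) = face p.
Proof.
apply: face_rev => //; first by rewrite Hpv0 c_v0.
by move=> y; rewrite !rhoE Hpp ss.
Qed.

Lemma face_rho : act_face rho (face p) = face p.
Proof. by rewrite act_faceM face_p face_s. Qed.

Lemma face_stab g : g \in G -> E0 \in act_face g (face p) -> act_face g (face p) = face p.
Proof.
move=> Hg /imsetP [E /mem_face [y Hy ->]]; rewrite act_edge2 => HE.
have Hr : exists2 r, r \in G & [/\ act_face r (face p) = face p, r y = v0 & r (rho y) = x0].
  move: y Hy {HE}; apply: (c_ind (P := fun y => exists2 r, r \in G & [/\ act_face r (face p) = face p, r y = v0 & r (rho y) = x0])).
    by exists 1; rewrite ?group1 // act_face1 !perm1 rho_v0.
  move=> y [r Hr [H1 H2 H3]]; exists (rho^-1 * r); first by rewrite groupM ?groupV ?rhoG.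
  split; first by rewrite act_faceM -{1}face_rho act_faceK.
    by rewrite (permM rho^-1 r) permK.
  by rewrite (permM rho^-1 r) permK.
have Hey := c_edge Hy.
case: Hr => r Hr [Hr1 Hr2 Hr3]; case: (set2_cases HE) => [[H1 H2] | [H1 H2]].
  have -> : g = r by apply: (arc_uniq Hey) => //; congruence.
  exact: Hr1.
have Hgs : g * s = r.
  apply: (arc_uniq Hey); rewrite ?groupM //.
    by rewrite permM -H2 Hsx0 Hr2.
  by rewrite (permM g s) -H1 Hsv0 Hr3.
have -> : g = r * s^-1 by rewrite -Hgs mulgK.
by rewrite act_faceM Hr1 -{1}face_s act_faceK.
Qed.

End FaceP.

Definition Fmap p q := [set act_face g (face p) | g in G] :|: [set act_face g (face q) | g in G].

Lemma edge_trans E : is_edge e E -> exists2 h, h \in G & E = act_edge h E0.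
Proof.
case/is_edgeP => x [y [H ->]]; have [h Hh [H1 H2]] := arc_ex Hv0x0 H.
by exists h; rewrite // /E0 act_edge2 H1 H2.
Qed.

Lemma nb4 p q :
  [/\ p \in G, p v0 = v0, (forall y, p (p y) = y) & p x0 != x0] ->
  [/\ q \in G, q v0 = v0, (forall y, q (q y) = y) & q x0 != x0] ->
  p x0 != q x0 -> forall y, e v0 y -> y \in [set x0; p x0; q x0; q (p x0)].
Proof.
move=> [Hp Hpv0 Hpp Hpx0] [Hq Hqv0 Hqq Hqx0] Hpq.
have ep : e v0 (p x0) by rewrite -{1}Hpv0 autE.
have eq : e v0 (q x0) by rewrite -{1}Hqv0 autE.
pose s4 := [:: x0; p x0; q x0; q (p x0)].
have d1 : x0 != p x0 by rewrite eq_sym.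
have d2 : x0 != q x0 by rewrite eq_sym.
have d3 : x0 != q (p x0).
  apply/eqP => H; move: Hpq; rewrite -{1}(Hqq (p x0)) -H eqxx //.
have d4 : p x0 != q (p x0).
  apply/eqP => H; move: Hqx0; suff -> : q = 1 by rewrite perm1 eqxx.
  by apply: (arc_uniq ep); rewrite ?group1 ?perm1.
have d5 : q x0 != q (p x0) by rewrite (inj_eq (@perm_inj _ q)).
have Hu4 : uniq s4 by rewrite /= !inE !negb_or d1 d2 d3 Hpq d4 d5.
have Hsub : [pred y in s4] \subset [set w | e v0 w].
  apply/subsetP => y; rewrite !inE => /or4P [] /eqP ->; rewrite ?Hv0x0 ?ep ?eq //.
  by rewrite -{1}Hqv0 autE.
have Hc4 : #|[pred y in s4]| = #|[set w | e v0 w]| by rewrite Ht (card_uniqP Hu4).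
move=> y Hy; have := (subset_cardP Hc4 Hsub) y; rewrite !inE Hy /= -!orbA => ->.
by [].
Qed.

Lemma face_neq p q :
  [/\ p \in G, p v0 = v0, (forall y, p (p y) = y) & p x0 != x0] ->
  [/\ q \in G, q v0 = v0, (forall y, q (q y) = y) & q x0 != x0] ->
  p x0 != q x0 -> face p != face q.
Proof.
move=> [Hp Hpv0 Hpp Hpx0] [Hq Hqv0 Hqq Hqx0] Hpq.
apply/eqP => Heq; have := face_E1 Hp Hpv0 Hpp Hpx0; rewrite Heq.
case/(face_at Hq Hqv0 Hqq Hqx0); first by rewrite set21.
  by move/(@set2_eqr v0) => H; move: Hpx0; rewrite H eqxx.
by move/(@set2_eqr v0) => H; move: Hpq; rewrite H eqxx.
Qed.

Lemma K_card : #|'C_(G)[v0 | 'P]| = 4.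
Proof.
suff : [set w | e v0 w] = (fun k : {perm V} => k x0) @: 'C_(G)[v0 | 'P].
  move=> HH; rewrite -(Ht v0) HH card_in_imset //.
  move=> k1 k2; rewrite !inK => /andP [H1 /eqP H2] /andP [H3 /eqP H4] H5.
  exact: stab_eq.
apply/setP => y; rewrite inE; apply/idP/imsetP => [Hy | [k]].
  by have [k Hk [H1 H2]] := nbrK Hy; exists k; rewrite ?inK ?Hk ?H1 ?eqxx.
by rewrite inK => /andP [Hk /eqP Hkv0] ->; rewrite -{1}Hkv0 autE.
Qed.

Section Map.
Variables p q : {perm V}.
Hypotheses (Hp : p \in G) (Hpv0 : p v0 = v0) (Hpp : forall y, p (p y) = y) (Hpx0 : p x0 != x0).
Hypotheses (Hq : q \in G) (Hqv0 : q v0 = v0) (Hqq : forall y, q (q y) = y) (Hqx0 : q x0 != x0).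
Hypotheses (Hpq : p x0 != q x0) (Hnb : forall y, e v0 y -> y \in [set x0; p x0; q x0; q (p x0)]).
Hypothesis (Hconn : connected_graph e).

Local Notation F := (Fmap p q).

Lemma fpq_neq : face p != face q.
Proof.
apply/eqP => Heq; have := face_E1 Hp Hpv0 Hpp Hpx0; rewrite Heq.
case/(face_at Hq Hqv0 Hqq Hqx0); first by rewrite set21.
  by move/(@set2_eqr v0) => H; move: Hpx0; rewrite H eqxx.
by move/(@set2_eqr v0) => H; move: Hpq; rewrite H eqxx.
Qed.

Lemma F_inv h : h \in G -> act_face h @: F = F.
Proof.
move=> Hh; apply: imset_sub_eq; first exact: act_face_inj.
apply/subsetP => f' /imsetP [f Hf ->]; rewrite inE.
case/setUP: Hf => /imsetP [g Hg ->]; rewrite -act_faceM.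
  by apply/orP; left; apply: imset_f; rewrite groupM.
by apply/orP; right; apply: imset_f; rewrite groupM.
Qed.

Lemma F_MA h : h \in G -> h \in map_aut e F.
Proof. by move=> Hh; rewrite inE Hh F_inv ?eqxx. Qed.

Lemma F_mem h f : h \in G -> f \in F -> act_face h f \in F.
Proof. by move=> Hh Hf; rewrite -(F_inv Hh); apply: imset_f. Qed.

Lemma fp_in : face p \in F.
Proof. by rewrite inE; apply/orP; left; apply/imsetP; exists 1; rewrite ?group1 ?act_face1. Qed.
Lemma fq_in : face q \in F.
Proof. by rewrite inE; apply/orP; right; apply/imsetP; exists 1; rewrite ?group1 ?act_face1. Qed.

Lemma F_E0 f : f \in F -> E0 \in f -> f = face p \/ f = face q.
Proof.
case/setUP => /imsetP [g Hg ->] H.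
  by left; apply: (face_stab Hp Hpv0 Hpp Hpx0).
by right; apply: (face_stab Hq Hqv0 Hqq Hqx0).
Qed.

Lemma F_count E : is_edge e E -> #|[set f in F | E \in f]| = 2.
Proof.
case/edge_trans => h Hh ->.
have -> : [set f in F | act_edge h E0 \in f] = [set act_face h (face p); act_face h (face q)].
  apply/setP => f; apply/setIdP/set2P => [[Hf HE] | [] ->].
    have Hf' : act_face h^-1 f \in F by apply: F_mem; rewrite ?groupV.
    have HE' : E0 \in act_face h^-1 f by rewrite -(act_edgeK h E0) mem_act_face.
    by case: (F_E0 Hf' HE') => <-; rewrite act_faceKV; [left | right].
    by rewrite F_mem ?fp_in // mem_act_face face_E0.
  by rewrite F_mem ?fq_in // mem_act_face face_E0.
rewrite cards2; suff -> : act_face h (face p) != act_face h (face q) by [].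
by rewrite (inj_eq (@act_face_inj h)) fpq_neq.
Qed.

Lemma F_cycle f : f \in F -> cycle_face e f.
Proof.
have H : forall r g, r \in G -> r v0 = v0 -> (forall y, r (r y) = y) -> r x0 != x0 ->
    g \in G -> cycle_face e (act_face g (face r)).
  move=> r g Hr Hrv0 Hrr Hrx0 Hg.
  have [c [Hu Hsz Hcc ->]] := face_cycle Hr Hrv0 Hrr Hrx0.
  have [H1 H2 H3 H4] := cf_act Hg Hu Hsz Hcc.
  by exists (map g c); split.
by case/setUP => /imsetP [g Hg ->]; apply: H.
Qed.

Lemma F_link w E1 E2 : is_edge e E1 -> is_edge e E2 -> w \in E1 -> w \in E2 ->
  connect (link_rel e F w) E1 E2.
Proof.
have [h Hh Hw] := trans_v w Hv0x0.
pose N z := act_edge h [set v0; z].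
have lk : forall z1 z2 f0, f0 \in F -> e v0 z1 -> e v0 z2 ->
    [set v0; z1] \in f0 -> [set v0; z2] \in f0 -> link_rel e F w (N z1) (N z2).
  move=> z1 z2 f0 Hf0 H1 H2 H3 H4; rewrite /link_rel /N !act_edge2 Hw !set21 /=.
  apply/and3P; split; try (by apply: is_edge2; rewrite -Hw autE).
  apply/existsP; exists (act_face h f0).
  by rewrite F_mem //= -Hw -!act_edge2 !mem_act_face H3 H4.
have ep : e v0 (p x0) by rewrite -{1}Hpv0 autE.
have eq : e v0 (q x0) by rewrite -{1}Hqv0 autE.
have eqp : e v0 (q (p x0)) by rewrite -{1}Hqv0 autE.
have fqp : act_face q (face p) \in F by apply: F_mem; rewrite ?fp_in.
have fqp1 : [set v0; q x0] \in act_face q (face p).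
  by rewrite -{1}Hqv0 -act_edge2 mem_act_face face_E0.
have fqp2 : [set v0; q (p x0)] \in act_face q (face p).
  by rewrite -{1}Hqv0 -act_edge2 mem_act_face face_E1.
have hub : forall z, e v0 z -> connect (link_rel e F w) (N x0) (N z) /\
                                connect (link_rel e F w) (N z) (N x0).
  move=> z /Hnb; rewrite !inE -!orbA => /or4P [] /eqP ->; first by split; apply: connect0.
  - split; apply: connect1; apply: (lk _ _ (face p)); rewrite ?fp_in ?face_E0 ?face_E1 //.
  - split; apply: connect1; apply: (lk _ _ (face q)); rewrite ?fq_in ?face_E0 ?face_E1 //.
  - split.
      apply: (@connect_trans _ _ (N (q x0))); apply: connect1.
        by apply: (lk _ _ (face q)); rewrite ?fq_in ?face_E0 ?face_E1.
      by apply: (lk _ _ _ fqp).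
    apply: (@connect_trans _ _ (N (q x0))); apply: connect1.
      by apply: (lk _ _ _ fqp).
    by apply: (lk _ _ (face q)); rewrite ?fq_in ?face_E0 ?face_E1.
have toN : forall E, is_edge e E -> w \in E -> exists2 z, e v0 z & E = N z.
  move=> E HE HwE; have [y [Hy ->]] := edge_at HE HwE.
  exists (h^-1 y).
    have -> : v0 = h^-1 w by rewrite -Hw permK.
    by rewrite autE ?groupV.
  by rewrite /N act_edge2 permKV Hw.
move=> HE1 HE2 Hw1 Hw2.
have [z1 Hz1 ->] := toN _ HE1 Hw1; have [z2 Hz2 ->] := toN _ HE2 Hw2.
apply: (@connect_trans _ _ (N x0)); [exact: (hub z1 Hz1).2 | exact: (hub z2 Hz2).1].
Qed.

Lemma F_is_map : is_map e F.
Proof.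
split => //; [exact: F_cycle | exact: F_count | ].
by move=> w a b Ha1 Hb1 Hwa Hwb; apply: F_link.
Qed.

Lemma pq_cases r : r = p \/ r = q ->
  [/\ r \in G, r v0 = v0, (forall y, r (r y) = y), r x0 != x0 & face r \in F].
Proof. by case=> ->; split; rewrite ?fp_in ?fq_in. Qed.

Lemma to_base t : is_flag e F t -> exists2 g, g \in G &
   exists2 r, r = p \/ r = q & act_flag g t = (v0, E0, face r).
Proof.
case: t => [[w E] f] /and4P /= [H1 H2 H3 H4].
have [y [Hy HE]] := edge_at H2 H1.
have [g Hg [Hg1 Hg2]] := arc_ex Hy Hv0x0.
have HgE : act_edge g E = E0 by rewrite HE act_edge2 Hg1 Hg2.
have Hf : act_face g f \in F by apply: F_mem.
have HE0 : E0 \in act_face g f by rewrite -HgE mem_act_face.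
exists g => //; case: (F_E0 Hf HE0) => Hr; [exists p | exists q]; rewrite ?Hr; auto;
  by rewrite /act_flag /= Hg1 HgE Hr.
Qed.

Lemma not_so : ~ same_orbit e F (v0, E0, face p) (v0, E0, face q).
Proof.
case=> g /MA_G Hg [H1 H2 H3].
have Hgx0 : g x0 = x0.
  by move: H2; rewrite /E0 act_edge2 H1 => /(@set2_eqr v0).
have Hg1 : g = 1 by apply: stab_eq; rewrite ?group1 ?perm1.
by move: H3; rewrite Hg1 act_face1 => /eqP; rewrite (negbTE fpq_neq).
Qed.

Lemma F_class2 : class2_01 e F.
Proof.
have Bflag : forall r, r = p \/ r = q -> is_flag e F (v0, E0, face r).
  move=> r /pq_cases [Hr Hrv0 Hrr Hrx0 HrF]; apply/and4P; split => //=.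
  - by rewrite set21.
  - exact: E0_edge.
  - exact: face_E0.
split.
- exists (v0, E0, face p), (v0, E0, face q); split; try (by apply: Bflag; auto).
    exact: not_so.
  move=> t /to_base [g Hg [r [] -> Hgt2]]; [left | right]; apply: so_sym;
    exists g; rewrite ?Hgt2 //; exact: F_MA.
- move=> t u Htf Huf Hadj; case: (to_base Htf) => g Hg [r Hr Hgt].
  apply: (so_act (F_MA Hg)); rewrite Hgt.
  have Hu' := is_flag_act (F_MA Hg) Huf.
  case: (pq_cases Hr) => Hr1 Hr2 Hr3 Hr4 Hr5.
  move: Hadj Hu' Hgt; clear Htf Huf; case: t => [[w E] f]; case: u => [[w' E'] f'].
  rewrite /adj0 /act_flag /= => -[Hw HE Hf] /and4P /= [H1 _ _ _] [Hgw HgE Hgf].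
  subst E' f'; rewrite HgE Hgf; rewrite HgE in H1.
  have Hw' : g w' = x0.
    case/set2P: H1 => // H; case: Hw; apply: (@perm_inj _ g); by rewrite H Hgw.
  rewrite Hw'; exists s; first exact: F_MA.
  by rewrite /act_flag /= Hsv0 /E0 act_edge2 Hsv0 Hsx0 setUC (face_s Hr1 Hr2 Hr3 Hr4).
- move=> t u Htf Huf Hadj; case: (to_base Htf) => g Hg [r Hr Hgt].
  apply: (so_act (F_MA Hg)); rewrite Hgt.
  have Hu' := is_flag_act (F_MA Hg) Huf.
  case: (pq_cases Hr) => Hr1 Hr2 Hr3 Hr4 Hr5.
  move: Hadj Hu' Hgt; clear Htf Huf; case: t => [[w E] f]; case: u => [[w' E'] f'].
  rewrite /adj1 /act_flag /= => -[Hw HE Hf] /and4P /= [H1 _ H3 _] [Hgw HgE Hgf].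
  subst w' f'; rewrite Hgw Hgf; rewrite Hgw in H1; rewrite Hgf in H3.
  have HE' : act_edge g E' = [set v0; r x0].
    case: (face_at Hr1 Hr2 Hr3 Hr4 H3 H1) => // H; case: HE.
    by apply: (@act_edge_inj g); rewrite H HgE.
  rewrite HE'; exists r; first exact: F_MA.
  by rewrite /act_flag /= Hr2 /E0 act_edge2 Hr2 (face_p Hr1 Hr2 Hr3 Hr4).
- move=> t u Htf Huf Hadj Hso; case: (to_base Htf) => g Hg [r Hr Hgt].
  have Hso' : same_orbit e F (act_flag g t) (act_flag g u).
    apply: (so_trans (u := t)); first by apply: so_sym; exists g => //; exact: F_MA.
    apply: (so_trans Hso); exists g => //; exact: F_MA.
  have Hu' := is_flag_act (F_MA Hg) Huf.
  move: Hadj Hu' Hgt Hso'; clear Htf Huf Hso; case: t => [[w E] f]; case: u => [[w' E'] f'].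
  rewrite /adj2 /act_flag /= => -[Hw HE Hf] /and4P /= [_ _ H3 H4] [Hgw HgE Hgf].
  subst w' E'; rewrite Hgw HgE Hgf; rewrite HgE in H3.
  have Hne : act_face g f' != face r.
    by rewrite -Hgf (inj_eq (@act_face_inj g)); apply/eqP.
  case: (F_E0 H4 H3) => Hf'; rewrite Hf' in Hne *; case: Hr => Hr; subst r; move=> Hs';
    try by rewrite eqxx in Hne.
    by apply: not_so; apply: so_sym.
  exact: not_so.
Qed.

End Map.
Section Uniq.
Variable F : {set {set {set V}}}.
Hypotheses (HF : is_map e F) (HC : class2_01 e F).

Lemma two_faces E f1 f2 f : is_edge e E -> f1 != f2 -> f1 \in F -> f2 \in F -> E \in f1 -> E \in f2 ->
  f \in F -> E \in f -> f = f1 \/ f = f2.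
Proof.
move=> HE Hne H1 H2 H3 H4 H5 H6; case: HF => _ _ Hcnt _.
have Hsub : [set f1; f2] \subset [set f in F | E \in f].
  by apply/subsetP => x /set2P [] ->; rewrite inE ?H1 ?H2 ?H3 ?H4.
have Hc : #|[set f1; f2]| = #|[set f in F | E \in f]| by rewrite Hcnt // cards2 Hne.
have := (subset_cardP Hc Hsub) f; rewrite !inE H5 H6 => /= /orP [] /eqP; auto.
Qed.

Lemma cf_of f : f \in F -> exists c, [/\ uniq c, 2 < size c, path.cycle e c & f = cedges c].
Proof. by case: HF => _ Hcyc _ _ /Hcyc. Qed.

Lemma corner f : f \in F -> E0 \in f -> exists r, [/\ r \in map_aut e F, r v0 = v0,
   (forall y, r (r y) = y), r x0 != x0 &
   [/\ act_face r f = f, [set v0; r x0] \in f &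
    (forall E, E \in f -> v0 \in E -> E = E0 \/ E = [set v0; r x0])]].
Proof.
move=> Hf HE0; have [c [Hu Hsz Hc Hfc]] := cf_of Hf.
rewrite Hfc in HE0.
have [E1 [HE1 Hv0E1 HE10 Huniq]] := cf_two Hu Hsz Hc HE0 (set21 v0 x0).
have [y1 [Hy1 HE1y]] := edge_at (cf_edge Hu Hsz Hc HE1) Hv0E1.
rewrite -Hfc in HE0 HE1 Huniq.
case: HC => _ _ Hadj1 _.
have Hfl : is_flag e F (v0, E0, f) by apply/and4P; split => //=; rewrite ?set21 ?E0_edge.
have Hfl1 : is_flag e F (v0, E1, f) by apply/and4P; split => //=; rewrite HE1y is_edge2.
have [g Hg Hgt] : same_orbit e F (v0, E0, f) (v0, E1, f).
  by apply: Hadj1 => //; split => //=; apply/eqP.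
move: Hgt; rewrite /act_flag /= => -[Hgv0 HgE0 Hgf].
have HgG := MA_G Hg.
have Hgx0 : g x0 = y1 by move: HgE0; rewrite /E0 act_edge2 Hgv0 HE1y => /(@set2_eqr v0).
have HgE1 : act_edge g E1 = E0.
  have : act_edge g E1 \in f by rewrite -Hgf mem_act_face.
  move/Huniq; rewrite -{1}Hgv0 mem_act_edge => /(_ Hv0E1) [] // H.
  by move: HE10; rewrite (act_edge_inj (etrans H (esym HgE0))) eqxx.
have Hgy1 : g y1 = x0 by move: HgE1; rewrite HE1y act_edge2 Hgv0 => /(@set2_eqr v0).
have Hgg : g * g = 1 by apply: stab_eq; rewrite ?groupM ?group1 ?perm1 ?permM ?Hgv0 ?Hgx0.
exists g; split => //.
- by move=> y; rewrite -permM Hgg perm1.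
- by rewrite Hgx0; apply: contra HE10 => /eqP Hy; rewrite HE1y Hy.
- split => //; first by rewrite Hgx0 -HE1y.
  by move=> E HE Hv; rewrite Hgx0 -HE1y; apply: Huniq.
Qed.

Lemma s_corner f : f \in F -> E0 \in f -> s \in map_aut e F /\ act_face s f = f.
Proof.
move=> Hf HE0; case: HC => _ Hadj0 _ _.
have Hfl : is_flag e F (v0, E0, f) by apply/and4P; split => //=; rewrite ?set21 ?E0_edge.
have Hfl' : is_flag e F (x0, E0, f) by apply/and4P; split => //=; rewrite ?set22 ?E0_edge.
have [g Hg Hgt] : same_orbit e F (v0, E0, f) (x0, E0, f).
  apply: Hadj0 => //; split => //=; apply/eqP; rewrite eq_sym; exact: e_neq.
move: Hgt; rewrite /act_flag /= => -[Hgv0 HgE0 Hgf].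
have Hgx0 : g x0 = v0.
  move: HgE0; rewrite /E0 act_edge2 Hgv0 => /set2_cases [[H _] | [_ H]] //.
  by move: Hv0x0; rewrite H eirr.
have -> : s = g by apply: (arc_uniq Hv0x0); rewrite ?(MA_G Hg) ?Hgv0 ?Hgx0.
by [].
Qed.

Lemma third_nbr a b : exists2 z, e v0 z & (z != a) && (z != b).
Proof.
have : ~~ ([set w | e v0 w] \subset [set a; b]).
  apply/negP => /subset_leq_card; rewrite Ht cards2; by case: (_ != _).
case/subsetPn => z; rewrite !inE negb_or => H1 H2; by exists z.
Qed.

Lemma F_is_Fmap : exists p q,
  [/\ [/\ p \in G, p v0 = v0, (forall y, p (p y) = y) & p x0 != x0],
      [/\ q \in G, q v0 = v0, (forall y, q (q y) = y) & q x0 != x0],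
      p x0 != q x0, (forall y, e v0 y -> y \in [set x0; p x0; q x0; q (p x0)]) &
      F = Fmap p q].
Proof.
case: (HF) => Hconn Hcyc Hcnt Hlink.
have /cards2P [f1 [f2 [Hne Hset]]] : #|[set f in F | E0 \in f]| == 2 by rewrite Hcnt ?E0_edge.
have : f1 \in [set f in F | E0 \in f] by rewrite Hset set21.
rewrite inE => /andP [Hf1 HE1].
have : f2 \in [set f in F | E0 \in f] by rewrite Hset set22.
rewrite inE => /andP [Hf2 HE2].
have [p [HpM Hpv0 Hpp Hpx0 [Hpf Hpf1 Hpat]]] := corner Hf1 HE1.
have [q [HqM Hqv0 Hqq Hqx0 [Hqf Hqf2 Hqat]]] := corner Hf2 HE2.
have [HsMA Hsf1] := s_corner Hf1 HE1.
have [_ Hsf2] := s_corner Hf2 HE2.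
have Hp := MA_G HpM; have Hq := MA_G HqM.
have ep : e v0 (p x0) by rewrite -{1}Hpv0 autE.
have eq : e v0 (q x0) by rewrite -{1}Hqv0 autE.
have Hpq : p x0 != q x0.
  apply/negP => /eqP Hpq.
  pose E1 := [set v0; p x0].
  have HE1f2 : E1 \in f2 by rewrite /E1 Hpq.
  have HE1e : is_edge e E1 := is_edge2 ep.
  have [z Hz /andP [Hz1 Hz2]] := third_nbr x0 (p x0).
  have : [set v0; z] \in [set E0; E1].
    apply: (connect_stay (r := link_rel e F v0) (S := mem [set E0; E1]) (a := E0)).
    - by rewrite set21.
    - move=> A B HA /and5P [_ HvB _ HBe /existsP [f /and3P [Hf HAf HBf]]].
      have Hff : f = f1 \/ f = f2.
        case/set2P: HA => HA; subst A.
          by apply: (two_faces E0_edge Hne).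
        by apply: (two_faces HE1e Hne).
      rewrite inE; case: Hff => Hff; subst f.
        by case: (Hpat _ HBf HvB) => ->; rewrite !inE /E1 eqxx ?orbT.
      by case: (Hqat _ HBf HvB) => ->; rewrite !inE /E1 -?Hpq eqxx ?orbT.
    - by apply: Hlink; rewrite ?E0_edge ?set21 ?is_edge2.
  case/set2P => /(@set2_eqr v0) H; [by rewrite H eqxx in Hz1 | by rewrite H eqxx in Hz2].
have Hnb : forall y, e v0 y -> y \in [set x0; p x0; q x0; q (p x0)].
  pose s4 := [:: x0; p x0; q x0; q (p x0)].
  have d1 : x0 != p x0 by rewrite eq_sym.
  have d2 : x0 != q x0 by rewrite eq_sym.
  have d3 : x0 != q (p x0).
    apply/eqP => H; move: Hpq; rewrite -{1}(Hqq (p x0)) -H eqxx //.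
  have d4 : p x0 != q (p x0).
    apply/eqP => H; move: Hqx0; suff -> : q = 1 by rewrite perm1 eqxx.
    by apply: (arc_uniq ep); rewrite ?group1 ?perm1.
  have d5 : q x0 != q (p x0) by rewrite (inj_eq (@perm_inj _ q)).
  have Hu4 : uniq s4 by rewrite /= !inE !negb_or d1 d2 d3 Hpq d4 d5.
  have Hsub : [pred y in s4] \subset [set w | e v0 w].
    apply/subsetP => y; rewrite !inE => /or4P [] /eqP ->; rewrite ?Hv0x0 ?ep ?eq //.
    by rewrite -{1}Hqv0 autE.
  have Hc4 : #|[pred y in s4]| = #|[set w | e v0 w]| by rewrite Ht (card_uniqP Hu4).
  move=> y Hy; have := (subset_cardP Hc4 Hsub) y; rewrite !inE Hy /= -!orbA => ->.
  by [].
have K4 : forall k, k \in G -> k v0 = v0 -> k \in map_aut e F.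
  move=> k Hk Hkv0; have Hk0 : e v0 (k x0) by rewrite -{1}Hkv0 autE.
  have Hm := Hnb _ Hk0; rewrite !inE -!orbA in Hm.
  case/or4P: Hm => /eqP Hkx.
  - have -> : k = 1 by apply: stab_eq; rewrite ?group1 ?perm1.
    exact: MA_1.
  - by have -> : k = p by apply: stab_eq.
  - by have -> : k = q by apply: stab_eq.
  - have -> : k = p * q by apply: stab_eq; rewrite ?groupM ?permM ?Hpv0 ?Hqv0.
    exact: MA_M.
have reach : forall w, exists2 h, h \in map_aut e F & h v0 = w.
  move=> w.
  have : w \in [pred w | [exists h in map_aut e F, h v0 == w]].
    apply: (connect_stay (r := e) (a := v0)); last exact: Hconn.
      by apply/existsP; exists 1; rewrite MA_1 perm1 eqxx.
    move=> x y /existsP [h /andP [Hh /eqP Hhx]] Hxy.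
    have Hy : e v0 (h^-1 y).
      have -> : v0 = h^-1 x by rewrite -Hhx permK.
      by rewrite autE ?groupV ?(MA_G Hh).
    have [k Hk [Hkv0 Hkx0]] := nbrK Hy.
    apply/existsP; exists (s * k * h); apply/andP; split.
      by apply: MA_M => //; apply: MA_M => //; apply: K4.
    by rewrite !permM Hsv0 Hkx0 permKV.
  by case/existsP => h /andP [Hh /eqP Hhw]; exists h.
have GMA : forall g, g \in G -> g \in map_aut e F.
  move=> g Hg; have [h Hh Hhv] := reach (g v0).
  have Hk : g * h^-1 \in map_aut e F.
    by apply: K4; rewrite ?groupM ?groupV ?(MA_G Hh) // permM -Hhv permK.
  by have := MA_M Hk Hh; rewrite -mulgA mulVg mulg1.
have Hfp : forall r f, r \in G -> r v0 = v0 -> (forall y, r (r y) = y) -> r x0 != x0 ->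
    f \in F -> E0 \in f -> act_face r f = f -> act_face s f = f -> f = face r.
  move=> r f Hr Hrv0 Hrr Hrx0 Hf HE0 Hrf Hsf.
  have [c [Hu Hsz Hc Hfc]] := cf_of Hf.
  have [c' [Hu' Hsz' Hc' Hfc']] := face_cycle Hr Hrv0 Hrr Hrx0.
  rewrite Hfc Hfc'; apply/esym/cf_sub => //.
  have -> : cedges c' = face r by rewrite Hfc'.
  rewrite -Hfc; apply/subsetP => E /(mem_face Hr Hrv0 Hrr Hrx0) [y Hy ->].
  move: y Hy; apply: (c_ind Hr Hrv0 Hrr Hrx0 (P := fun y => [set y; (r * s) y] \in f)).
    by rewrite (rho_v0 Hr Hrv0 Hrr Hrx0).
  move=> y Hy; rewrite -act_edge2 -Hsf -Hrf -act_faceM mem_act_face //.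
have Hf1p : f1 = face p by apply: Hfp.
have Hf2q : f2 = face q by apply: Hfp.
exists p, q; split => //.
apply/setP => f; apply/idP/idP.
- move=> Hf; have [c [Hu Hsz Hc Hfc]] := cf_of Hf.
  have [x Hx] : exists x, x \in c by case: (c) Hsz => [|x r] //; exists x; rewrite inE eqxx.
  have HE : [set x; next c x] \in f by rewrite Hfc; apply: cf_next.
  have [h Hh HEh] := edge_trans (cf_edge Hu Hsz Hc (cf_next Hu Hsz Hc Hx)).
  have Hf' : act_face h^-1 f \in F.
    by rewrite -(MA_inv (GMA _ (groupVr Hh))); apply: imset_f.
  have HE0' : E0 \in act_face h^-1 f by rewrite -(act_edgeK h E0) -HEh mem_act_face.
  have : act_face h^-1 f \in [set f in F | E0 \in f] by rewrite inE Hf' HE0'.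
  rewrite Hset => /set2P [] Hfh; rewrite inE; apply/orP; [left | right];
    apply/imsetP; exists h => //; by rewrite -?Hf1p -?Hf2q -Hfh act_faceKV.
- case/setUP => /imsetP [g Hg ->]; rewrite -(MA_inv (GMA _ Hg)); apply: imset_f;
    by rewrite -?Hf1p -?Hf2q.
Qed.

End Uniq.

End Base.

End Basic.
Lemma klein_abelem : (2.-abelem [set: 'Z_2 * 'Z_2])%g.
Proof.
rewrite abelemE //; apply/andP; split.
  apply/centsP => x _ y _; apply/commute_sym.
  by case: x y => [a b] [c d]; rewrite /commute; congr pair; apply: Zp_addC.
apply/exponentP => -[a b] _.
by case: a => -[|[|//]] ?; case: b => -[|[|//]] ?; apply/eqP.
Qed.
Lemma klein_card : #|[set: 'Z_2 * 'Z_2]| = 4.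
Proof. by rewrite cardsT card_prod card_ord. Qed.
Lemma klein_iso (gT : finGroupType) (K : {group gT}) :
  K \isog [set: 'Z_2 * 'Z_2] <-> (#|K| = 4 /\ forall k, k \in K -> k * k = 1).
Proof.
split.
  move=> Hiso; split; first by rewrite (card_isog Hiso) klein_card.
  have : (2.-abelem K)%g by rewrite (isog_abelem Hiso) klein_abelem.
  rewrite abelemE // => /andP [_ /exponentP H] k Hk.
  by have := H k Hk; rewrite expgS expg1.
move=> [Hc Hk].
have Hab : abelian K by apply: (@card_p2group_abelian _ 2) => //; rewrite Hc.
have HabK : (2.-abelem K)%g.
  rewrite abelemE // Hab /=; apply/exponentP => x Hx.
  by rewrite expgS expg1 Hk.
by rewrite (isog_abelem_card _ HabK) klein_abelem klein_card Hc.
Qed.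

Lemma comm_of (gT : finGroupType) (K : {group gT}) x y :
  #|K| = 4 -> x \in K -> y \in K -> x * y = y * x.
Proof.
move=> Hc Hx Hy.
have Hab : abelian K by apply: (@card_p2group_abelian _ 2) => //; rewrite Hc.
exact: (centsP Hab).
Qed.

Section Final.
Variables (V : finType) (e : rel V).
Implicit Types (p q r k a b : {perm V}).
Hypotheses (He : simple_graph e) (Hc : connected_graph e) (Ht : tetravalent e) (Ha : arc_regular e).
Local Notation G := (graph_aut e).

Lemma setup v : exists x0, exists2 s, e v x0 & [/\ s \in G, s v = x0 & s x0 = v].
Proof.
have [x0 Hx] := has_nbr He Ht Ha v.
have [s Hs [H1 H2]] := arc_ex He Ht Ha Hx (etrans (e_sym He Ht Ha x0 v) Hx).
by exists x0, s.
Qed.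

Section Fix.
Variables (v0 x0 : V) (s : {perm V}).
Hypotheses (Hx : e v0 x0) (Hs : s \in G) (Hsv : s v0 = x0) (Hsx : s x0 = v0).
Local Notation good p := [/\ p \in G, p v0 = v0, (forall y, p (p y) = y) & p x0 != x0].
Local Notation Fm := (Fmap e v0 s).

Let stabE := stab_eq He Ht Ha Hx Hs Hsv Hsx.

Lemma W_all p q : good p -> good q -> p x0 != q x0 ->
  [/\ is_map e (Fm p q), class2_01 e (Fm p q),
      (forall h, h \in G -> act_face h @: Fm p q = Fm p q),
      face v0 s p \in Fm p q & face v0 s q \in Fm p q].
Proof.
move=> Hgp Hgq Hpq; have Hnb := nb4 He Ht Ha Hx Hs Hsv Hsx Hgp Hgq Hpq.
case: Hgp => Hp Hpv0 Hpp Hpx0; case: Hgq => Hq Hqv0 Hqq Hqx0.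
split.
- exact: (F_is_map He Ht Ha Hx Hs Hsv Hsx Hp Hpv0 Hpp Hpx0 Hq Hqv0 Hqq Hqx0 Hpq Hnb Hc).
- exact: (F_class2 He Ht Ha Hx Hs Hsv Hsx Hp Hpv0 Hpp Hpx0 Hq Hqv0 Hqq Hqx0 Hpq Hnb Hc).
- move=> h Hh; exact: (F_inv He Ht Ha Hx Hs Hsv Hsx Hp Hpv0 Hpp Hpx0 Hq Hqv0 Hqq Hqx0 Hpq Hnb Hc Hh).
- exact: (fp_in He Ht Ha Hx Hs Hsv Hsx Hp Hpv0 Hpp Hpx0 Hq Hqv0 Hqq Hqx0 Hpq Hnb Hc).
- exact: (fq_in He Ht Ha Hx Hs Hsv Hsx Hp Hpv0 Hpp Hpx0 Hq Hqv0 Hqq Hqx0 Hpq Hnb Hc).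
Qed.

Lemma W_niso p q (p' q' : {perm V}) r : good p -> good q -> p x0 != q x0 ->
  good p' -> good q' -> p' x0 != q' x0 -> (r = p' \/ r = q') -> good r ->
  r x0 != p x0 -> r x0 != q x0 -> ~ map_iso e (Fm p q) (Fm p' q').
Proof.
move=> Hgp Hgq Hpq Hgp' Hgq' Hpq' Hr Hgr Hrp Hrq [g Hg Heq].
have [_ _ Hinv _ _] := W_all Hgp Hgq Hpq.
have [_ _ _ Hp'in Hq'in] := W_all Hgp' Hgq' Hpq'.
rewrite Hinv // in Heq.
have Hrin : face v0 s r \in Fm p q by rewrite Heq; case: Hr => ->.
have HE0 : E0 v0 x0 \in face v0 s r by case: Hgr => Hr1 Hr2 Hr3 Hr4; apply: (face_E0 He Ht Ha Hx Hs Hsv Hsx Hr1 Hr2 Hr3 Hr4).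
case/setUP: Hrin => /imsetP [h Hh Hfr]; rewrite Hfr in HE0.
  case: Hgp => Hp Hpv0 Hpp Hpx0.
  have := face_stab He Ht Ha Hx Hs Hsv Hsx Hp Hpv0 Hpp Hpx0 Hh HE0.
  move=> H; rewrite H in Hfr; move: (face_neq He Ht Ha Hx Hs Hsv Hsx Hgr (And4 Hp Hpv0 Hpp Hpx0) Hrp).
  by rewrite Hfr eqxx.
case: Hgq => Hq Hqv0 Hqq Hqx0.
have := face_stab He Ht Ha Hx Hs Hsv Hsx Hq Hqv0 Hqq Hqx0 Hh HE0.
move=> H; rewrite H in Hfr; move: (face_neq He Ht Ha Hx Hs Hsv Hsx Hgr (And4 Hq Hqv0 Hqq Hqx0) Hrq).
by rewrite Hfr eqxx.
Qed.

Lemma pp1 (p : {perm V}) : (forall y, p (p y) = y) -> p * p = 1.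
Proof. by move=> H; apply/permP => y; rewrite permM perm1 H. Qed.

Lemma W_klein p q : good p -> good q -> p x0 != q x0 ->
  'C_(G)[v0 | 'P] \isog [set: 'Z_2 * 'Z_2].
Proof.
move=> Hgp Hgq Hpq; have Hnb := nb4 He Ht Ha Hx Hs Hsv Hsx Hgp Hgq Hpq.
case: Hgp => Hp Hpv0 Hpp Hpx0; case: Hgq => Hq Hqv0 Hqq Hqx0.
have Hcard := K_card He Ht Ha Hx Hs Hsv Hsx.
have HpK : p \in 'C_(G)[v0 | 'P] by rewrite (inK He Ht Ha) Hpv0 eqxx andbT.
have HqK : q \in 'C_(G)[v0 | 'P] by rewrite (inK He Ht Ha) Hqv0 eqxx andbT.
apply/klein_iso; split => // k; rewrite (inK He Ht Ha) => /andP [Hk /eqP Hkv0].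
have Hk0 : e v0 (k x0) by rewrite -{1}Hkv0 (autE He Ht Ha).
have Hm := Hnb _ Hk0; rewrite !inE -!orbA in Hm.
case/or4P: Hm => /eqP Hkx.
- have -> : k = 1 by apply: stabE; rewrite ?group1 ?perm1.
  by rewrite mulg1.
- have -> : k = p by apply: stabE.
  exact: pp1.
- have -> : k = q by apply: stabE.
  exact: pp1.
- have -> : k = p * q by apply: stabE; rewrite ?groupM ?permM ?Hpv0 ?Hqv0.
  by rewrite {1}(comm_of Hcard HpK HqK) -mulgA (mulgA p p q) (pp1 Hpp) mul1g (pp1 Hqq).
Qed.

Lemma W_bwd : 'C_(G)[v0 | 'P] \isog [set: 'Z_2 * 'Z_2] ->
  exists a b, [/\ good a, good b, good (a * b), a x0 != b x0 &
    [/\ a x0 != (a * b) x0, b x0 != (a * b) x0 &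
        forall p, good p -> [\/ p = a, p = b | p = a * b]]].
Proof.
case/klein_iso => Hcard Hinv.
have := cardsD1 1 ('C_(G)[v0 | 'P]); rewrite group1 Hcard add1n => -[H3'].
have H3 : 1 < #|'C_(G)[v0 | 'P] :\ 1| by rewrite -H3'.
case/card_gt1P: H3 => a [b [Ha1 Hb1 Hab]].
move: Ha1 Hb1; rewrite !in_setD1 => /andP [Ha1 HaK] /andP [Hb1 HbK].
have HaK' := HaK; have HbK' := HbK.
have HcK : a * b \in 'C_(G)[v0 | 'P] by rewrite groupM.
have HcK' := HcK.
move: HaK HbK HcK; rewrite !(inK He Ht Ha) => /andP [HaG /eqP Hav] /andP [HbG /eqP Hbv] /andP [HcG /eqP Hcv].
have inv2 : forall k, k \in 'C_(G)[v0 | 'P] -> forall y, k (k y) = y.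
  by move=> k Hk y; rewrite -permM Hinv // perm1.
have ne : forall k k', k \in G -> k' \in G -> k v0 = v0 -> k' v0 = v0 -> k != k' -> k x0 != k' x0.
  move=> k k' Hk Hk' Hkv Hk'v; apply: contra => /eqP H; apply/eqP; exact: stabE.
have n1 : forall k, k \in G -> k v0 = v0 -> k != 1 -> k x0 != x0.
  by move=> k Hk Hkv Hk1; have := ne k 1 Hk (group1 _) Hkv (perm1 v0) Hk1; rewrite perm1.
have Hc1 : a * b != 1.
  apply: contra Hab => /eqP H; apply/eqP.
  by rewrite -(mulg1 a) -H mulgA Hinv // mul1g.
have Hca : a * b != a by rewrite -{2}(mulg1 a) (can_eq (mulKg a)).
have Hcb : a * b != b by rewrite -{2}(mul1g b) (can_eq (mulgK b)).
have ga : good a by split => //; [apply: inv2 | apply: n1].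
have gb : good b by split => //; [apply: inv2 | apply: n1].
have gc : good (a * b) by split => //; [apply: inv2 | apply: n1].
have Hab0 : a x0 != b x0 by apply: ne.
exists a, b; split => //; split.
- by rewrite eq_sym; apply: ne.
- by rewrite eq_sym; apply: ne.
move=> p [Hp Hpv Hpp Hpx].
have Hnb := nb4 He Ht Ha Hx Hs Hsv Hsx ga gb Hab0.
have Hp0 : e v0 (p x0) by rewrite -{1}Hpv (autE He Ht Ha).
have Hm := Hnb _ Hp0; rewrite !inE -!orbA in Hm.
case/or4P: Hm => /eqP Hpx'.
- by rewrite Hpx' eqxx in Hpx.
- by constructor 1; apply: stabE.
- by constructor 2; apply: stabE.
- by constructor 3; apply: stabE; rewrite // permM.
Qed.

Lemma iso_refl F : map_iso e F F.
Proof. by exists 1; rewrite ?group1 // (eq_imset _ (act_face1 He Ht Ha)) imset_id. Qed.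

End Fix.
End Final.

Theorem corollary2p8 (V : finType) (e : rel V) :
  0 < #|V| -> simple_graph e -> connected_graph e -> tetravalent e ->
  arc_regular e ->
  ((exists F, is_map e F /\ class2_01 e F) <-> klein_stabilizers e) /\
  (klein_stabilizers e ->
     exists F1 F2 F3,
       [/\ is_map e F1 /\ class2_01 e F1,
           is_map e F2 /\ class2_01 e F2,
           is_map e F3 /\ class2_01 e F3,
           [/\ ~ map_iso e F1 F2, ~ map_iso e F1 F3 & ~ map_iso e F2 F3] &
           forall F, is_map e F -> class2_01 e F ->
             [\/ map_iso e F F1, map_iso e F F2 | map_iso e F F3]]).
Proof.
move=> Hpos He Hc Ht Ha.
have [v0 _] : exists v : V, true by case/card_gt0P: Hpos => v _; exists v.
have [x0 [s Hx [Hs Hsv Hsx]]] := setup He Hc Ht Ha v0.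
have bwd : klein_stabilizers e -> _ := fun Hk => W_bwd He Hc Ht Ha Hx Hs Hsv Hsx (Hk v0).
split.
  split.
    move=> [F [HF HC]] v.
    have [y [t Hy [Ht' Htv Hty]]] := setup He Hc Ht Ha v.
    have [p [q [Hgp Hgq Hpq _ _]]] := F_is_Fmap He Ht Ha Hy Ht' Htv Hty HF HC.
    exact: (W_klein He Hc Ht Ha Hy Ht' Htv Hty Hgp Hgq Hpq).
  move=> Hk; have [a [b [ga gb gc Hab _]]] := bwd Hk.
  have [H1 H2 _ _ _] := W_all He Hc Ht Ha Hx Hs Hsv Hsx ga gb Hab.
  by exists (Fmap e v0 s a b).
move=> Hk; have [a [b [ga gb gc Hab [Hac Hbc Hall]]]] := bwd Hk.
have W := W_all He Hc Ht Ha Hx Hs Hsv Hsx.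
have N := W_niso He Hc Ht Ha Hx Hs Hsv Hsx.
have [M1 C1 _ _ _] := W _ _ ga gb Hab.
have [M2 C2 _ _ _] := W _ _ ga gc Hac.
have [M3 C3 _ _ _] := W _ _ gb gc Hbc.
exists (Fmap e v0 s a b), (Fmap e v0 s a (a * b)), (Fmap e v0 s b (a * b)).
split => //.
  split.
  - apply: (N _ _ _ _ (a * b) ga gb Hab ga gc Hac) => //; first by right.
      by rewrite eq_sym.
    by rewrite eq_sym.
  - apply: (N _ _ _ _ (a * b) ga gb Hab gb gc Hbc) => //; first by right.
      by rewrite eq_sym.
    by rewrite eq_sym.
  - apply: (N _ _ _ _ b ga gc Hac gb gc Hbc) => //; first by left.
    by rewrite eq_sym.
move=> F HF HC.
have [p [q [Hgp Hgq Hpq _ ->]]] := F_is_Fmap He Ht Ha Hx Hs Hsv Hsx HF HC.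
have Hsym : forall p' q', Fmap e v0 s p' q' = Fmap e v0 s q' p' by move=> p' q'; rewrite /Fmap setUC.
have R := iso_refl He Hc Ht Ha Hx Hs Hsv Hsx.
case: (Hall _ Hgp) => Ep; case: (Hall _ Hgq) => Eq; subst p q; try by rewrite eqxx in Hpq.
- by constructor 1; apply: R.
- by constructor 2; apply: R.
- by constructor 1; rewrite Hsym; apply: R.
- by constructor 3; apply: R.
- by constructor 2; rewrite Hsym; apply: R.
- by constructor 3; rewrite Hsym; apply: R.
Qed.
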